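(* Let $f:\widetilde{\mathbb C}\to\widetilde{\mathbb C}$ be a generalized holomorphic function which is generalized entire, and assume $f$ is bounded: there exists $M\in\widetilde{\mathbb R}_{>0}$ with $|f(z)|<M$ for all $z\in\widetilde{\mathbb C}$. Then $f$ is constant.
   Context: Fix $I=(0,1]$ and a gauge $\rho=(\rho_\varepsilon)_{\varepsilon\in I}$ with $\rho_\varepsilon\in I$ and $\rho_\varepsilon\to0$ as $\varepsilon\to0$. ''$\forall^0\varepsilon$'' means ''for all sufficiently small $\varepsilon\in I$''. A net $(x_\varepsilon)\in\mathbb C^I$ is $\rho$-moderate ($(x_\varepsilon)\in\mathbb C_\rho$) if $\exists N\in\mathbb N\,\forall^0\varepsilon:|x_\varepsilon|\le\rho_\varepsilon^{-N}$, and $\rho$-negligible if $\forall q\in\mathbb N\,\forall^0\varepsilon:|x_\varepsilon|\le\rho_\varepsilon^q$. $\widetilde{\mathbb C}:=\mathbb C_\rho/\{\text{negligible nets}\}$ with classes $[x_\varepsilon]$; $\widetilde{\mathbb R}\subseteq\widetilde{\mathbb C}$ consists of classes of real moderate nets; $\mathrm d\rho:=[\rho_\varepsilon]$, $|[z_\varepsilon]|:=[|z_\varepsilon|]$. On $\widetilde{\mathbb R}$: $[x_\varepsilon]\le[y_\varepsilon]$ iff $x_\varepsilon\le y_\varepsilon+z_\varepsilon$ $\forall^0\varepsilon$ for some negligible $(z_\varepsilon)$; $x<y$ iff $\exists m\,\forall^0\varepsilon:y_\varepsilon-x_\varepsilon>\rho_\varepsilon^m$; $\widetilde{\mathbb R}_{>0}:=\{x:x>0\}$.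 The sharp topology on $\widetilde{\mathbb C}$ is generated by $B_r(c):=\{z:|z-c|<r\}$, $r\in\widetilde{\mathbb R}_{>0}$. Hypernatural numbers: $\widetilde{\mathbb N}:=\{[n_\varepsilon]\in\widetilde{\mathbb R}:n_\varepsilon\in\mathbb N\ \forall\varepsilon\}$; for each $N\in\widetilde{\mathbb N}$ a representative $(\mathrm{ni}(N)_\varepsilon)$ with all $\mathrm{ni}(N)_\varepsilon\in\mathbb N$ is fixed. Hyperlimit: $l=\lim_{n\in\widetilde{\mathbb N}}a_n$ means $\forall q\,\exists M\in\widetilde{\mathbb N}\,\forall n\in\widetilde{\mathbb N}:n\ge M\Rightarrow|a_n-l|<\mathrm d\rho^q$. Hyperseries: a net $(a_{n\varepsilon})_{n\in\mathbb N,\varepsilon\in I}$ is moderate over hypersums if for every $N\in\widetilde{\mathbb N}$ the net $(\sum_{n=0}^{\mathrm{ni}(N)_\varepsilon}a_{n\varepsilon})_\varepsilon$ is $\rho$-moderate; two such nets are equivalent if for all $N,M\in\widetilde{\mathbb N}$ the net $(\sum_{n=\mathrm{ni}(N)_\varepsilon}^{\mathrm{ni}(M)_\varepsilon}(a_{n\varepsilon}-\bar a_{n\varepsilon}))_\varepsilon$ is negligible; the quotient is $\widetilde{\mathbb C}_{\mathrm s}$ with classes $[b_{n\varepsilon}]_{\mathrm s}$. $\sum_{n=N}^Mb_n:=[\sum_{n=\mathrm{ni}(N)_\varepsilon}^{\mathrm{ni}(M)_\varepsilon}b_{n\varepsilon}]$, and $\sum_{n\in\widetilde{\mathbb N}}b_n:=\lim_{N\in\widetilde{\mathbb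 N}}\sum_{n=0}^Nb_n$ when this exists. Coefficients: $\widetilde{\mathbb C}_{\mathrm c}$ is the set of weakly $\rho$-moderate nets $(a_{n\varepsilon})$ ($\exists Q,R\in\mathbb N\,\forall^0\varepsilon\,\forall n\in\mathbb N:|a_{n\varepsilon}|\le\rho_\varepsilon^{-nQ-R}$) modulo strong equivalence ($\forall q,r\,\forall^0\varepsilon\,\forall n:|a_{n\varepsilon}-\bar a_{n\varepsilon}|\le\rho_\varepsilon^{nq+r}$), classes $(a_n)_{\mathrm c}=[a_{n\varepsilon}]_{\mathrm c}$. $\widetilde{\mathbb R}_\infty:=(\mathbb R\cup\{\pm\infty\})^I/\sim_\rho$, and for $x\in\widetilde{\mathbb R}$, $y\in\widetilde{\mathbb R}_\infty$, $x<y$ iff $\exists m\,\forall^0\varepsilon:y_\varepsilon>x_\varepsilon+\rho_\varepsilon^m$. Radius: $\mathrm{rad}(a_n)_{\mathrm c}:=[(\limsup_n|a_{n\varepsilon}|^{1/n})^{-1}]\in\widetilde{\mathbb R}_\infty$. Set of convergence: $S((a_n)_{\mathrm c},c)$ is the set of $z\in\widetilde{\mathbb C}$ with $|z-c|<\mathrm{rad}(a_n)_{\mathrm c}$ for which there exist representatives $z=[z_\varepsilon]$, $c=[c_\varepsilon]$, $(a_n)_{\mathrm c}=[a_{n\varepsilon}]_{\mathrm c}$ such that: (a) the net $(a_{n\varepsilon}(z_\varepsilon-c_\varepsilon)^n)_{n,\varepsilon}$ is moderate over hypersums; (b) $\sum_{n\in\widetilde{\mathbb N}}a_n(z-c)^n$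 converges and equals $[\sum_{n=0}^{\infty}a_{n\varepsilon}(z_\varepsilon-c_\varepsilon)^n]$; (c) for every representative $z=[\hat z_\varepsilon]$, the net $(\sum_{n\ge1}na_{n\varepsilon}(\hat z_\varepsilon-c_\varepsilon)^{n-1})_\varepsilon$ is $\rho$-moderate. Generalized holomorphic functions: for $U\subseteq\widetilde{\mathbb C}$ sharply open, $f:U\to\widetilde{\mathbb C}$ is a GHF if there exist open sets $\Omega_\varepsilon\subseteq\mathbb C$ and holomorphic $f_\varepsilon:\Omega_\varepsilon\to\mathbb C$ such that for every $z\in U$ and every representative $z=[z_\varepsilon]$: $z_\varepsilon\in\Omega_\varepsilon$ $\forall^0\varepsilon$, $f(z)=[f_\varepsilon(z_\varepsilon)]$, and $(f_\varepsilon^{(k)}(z_\varepsilon))\in\mathbb C_\rho$ for all $k\in\mathbb N$; $f^{(k)}(z):=[f^{(k)}_\varepsilon(z_\varepsilon)]$. Generalized entire: $f:\widetilde{\mathbb C}\to\widetilde{\mathbb C}$ is generalized entire (at $c$) if there are $c\in\widetilde{\mathbb C}$ and $(a_n)_{\mathrm c}\in\widetilde{\mathbb C}_{\mathrm c}$ with $S((a_n)_{\mathrm c},c)=\widetilde{\mathbb C}$ and $f(z)=\sum_{n\in\widetilde{\mathbb N}}a_n(z-c)^n$ for all $z\in\widetilde{\mathbb C}$. *)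

(* Defs.v *)
(* Colombeau-type generalized numbers are encoded "setoid style":
   a generalized number is represented by a net  R -> C  (only the values
   at eps in (0,1] matter), and equality in C~ is the relation [gequiv]. *)
From Stdlib Require Import Reals List ClassicalEpsilon.
From Coquelicot Require Import Coquelicot.
Open Scope R_scope.

Definition net := R -> C.
Definition rnet := R -> R.

Definition is_gauge (rho : rnet) : Prop :=
  (forall e, 0 < e <= 1 -> 0 < rho e <= 1) /\
  (forall d, 0 < d -> exists e0, 0 < e0 /\ forall e, 0 < e <= e0 -> e <= 1 -> rho e < d).

Definition eventually0 (P : R -> Prop) : Prop :=
  exists e0, 0 < e0 <= 1 /\ forall e, 0 < e <= e0 -> P e.

Section Gen.
Variable rho : rnet.

Definition moderate (x : net) : Prop :=
  exists N : nat, eventually0 (fun e => Cmod (x e) <= / (rho e ^ N)).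

Definition rmoderate (x : rnet) : Prop :=
  exists N : nat, eventually0 (fun e => Rabs (x e) <= / (rho e ^ N)).

Definition negligible (x : net) : Prop :=
  forall q : nat, eventually0 (fun e => Cmod (x e) <= rho e ^ q).

Definition rnegligible (x : rnet) : Prop :=
  forall q : nat, eventually0 (fun e => Rabs (x e) <= rho e ^ q).

Definition gequiv (x y : net) : Prop := negligible (fun e => Cminus (x e) (y e)).

Definition rle (x y : rnet) : Prop :=
  exists z, rnegligible z /\ eventually0 (fun e => x e <= y e + z e).
Definition rlt (x y : rnet) : Prop :=
  exists m : nat, eventually0 (fun e => y e - x e > rho e ^ m).

Definition abs_lt (z : net) (r : rnet) : Prop := rlt (fun e => Cmod (z e)) r.

Definition hypernat (n : R -> nat) : Prop := rmoderate (fun e => INR (n e)).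

Definition hle (n m : R -> nat) : Prop :=
  rle (fun e => INR (n e)) (fun e => INR (m e)).

(* finite sums sum_{n=lo}^{hi} b n (empty if hi < lo) *)
Definition csum_range (lo hi : nat) (b : nat -> C) : C :=
  fold_right Cplus (RtoC 0) (map b (seq lo (S hi - lo))).

Fixpoint Cpow (z : C) (n : nat) : C :=
  match n with O => RtoC 1 | S k => Cmult z (Cpow z k) end.

Definition hypersum (b : nat -> net) (N : R -> nat) : net :=
  fun e => csum_range 0 (N e) (fun n => b n e).

Definition moderate_over_hypersums (b : nat -> net) : Prop :=
  forall N, hypernat N -> moderate (hypersum b N).

Definition hyperseries_is (b : nat -> net) (l : net) : Prop :=
  moderate l /\
  forall q : nat, exists M, hypernat M /\
    forall N, hypernat N -> hle M N ->
      abs_lt (fun e => Cminus (hypersum b N e) (l e)) (fun e => rho e ^ q).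

Definition Cseries (u : nat -> C) : C :=
  (Series (fun n => Re (u n)), Series (fun n => Im (u n))).

Definition weakly_moderate (a : nat -> net) : Prop :=
  exists Q R0 : nat, eventually0 (fun e =>
    forall n : nat, Cmod (a n e) <= / (rho e ^ (n * Q + R0))).

Definition strong_equiv (a b : nat -> net) : Prop :=
  forall q r : nat, eventually0 (fun e =>
    forall n : nat, Cmod (Cminus (a n e) (b n e)) <= rho e ^ (n * q + r)).

(* |a|^(1/n), with 0^(1/n) = 0 *)
Definition nroot (x : R) (n : nat) : R :=
  if Req_EM_T x 0 then 0 else Rpower x (/ INR n).

Definition Rbar_inv0 (l : Rbar) : Rbar :=
  match l with
  | Finite r => if Req_EM_T r 0 then p_infty else Finite (/ r)
  | p_infty => Finite 0
  | m_infty => p_infty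
  end.

Definition rad (a : nat -> net) : R -> Rbar :=
  fun e => Rbar_inv0 (LimSup_seq (fun n => nroot (Cmod (a n e)) n)).

Definition rlt_inf (x : rnet) (y : R -> Rbar) : Prop :=
  exists m : nat, eventually0 (fun e => Rbar_lt (Finite (x e + rho e ^ m)) (y e)).

(* conditions (a),(b),(c) in the definition of the set of convergence, with
   the value v of the hyperseries sum_{n in N~} a_n (z-c)^n *)
Definition conv_reps (a : nat -> net) (c z : net) (v : net) : Prop :=
  exists (z' c' : net) (a' : nat -> net),
    gequiv z' z /\ gequiv c' c /\ strong_equiv a' a /\
    moderate_over_hypersums (fun n e => Cmult (a' n e) (Cpow (Cminus (z' e) (c' e)) n)) /\
    hyperseries_is (fun n e => Cmult (a' n e) (Cpow (Cminus (z' e) (c' e)) n)) v /\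
    gequiv v (fun e => Cseries (fun n => Cmult (a' n e) (Cpow (Cminus (z' e) (c' e)) n))) /\
    (forall zh : net, gequiv zh z ->
       moderate (fun e => Cseries (fun n =>
         Cmult (RtoC (INR (S n))) (Cmult (a' (S n) e) (Cpow (Cminus (zh e) (c' e)) n))))).

Definition in_conv_set (a : nat -> net) (c z : net) : Prop :=
  moderate z /\
  rlt_inf (fun e => Cmod (Cminus (z e) (c e))) (rad a) /\
  exists v, conv_reps a c z v.

(* f : C~ -> C~ represented by F on nets: well defined on classes *)
Definition gfun (F : net -> net) : Prop :=
  (forall z, moderate z -> moderate (F z)) /\
  (forall z w, moderate z -> gequiv z w -> gequiv (F z) (F w)).

(* complex derivative (chosen when it exists) and iterated derivatives *)
Definition Cder (g : C -> C) (z : C) : C :=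
  epsilon (inhabits (RtoC 0))
    (fun l => @is_derive C_AbsRing C_NormedModule g z l).

Fixpoint Cder_n (k : nat) (g : C -> C) : C -> C :=
  match k with O => g | S j => Cder (Cder_n j g) end.

Definition holomorphic_on (Om : C -> Prop) (g : C -> C) : Prop :=
  forall z, Om z -> exists l, @is_derive C_AbsRing C_NormedModule g z l.

Definition GHF (F : net -> net) : Prop :=
  exists (Om : R -> C -> Prop) (f : R -> C -> C),
    (forall e, @open C_UniformSpace (Om e)) /\
    (forall e, holomorphic_on (Om e) (f e)) /\
    forall z, moderate z ->
      eventually0 (fun e => Om e (z e)) /\
      gequiv (F z) (fun e => f e (z e)) /\
      (forall k : nat, moderate (fun e => Cder_n k (f e) (z e))).

Definition gen_entire (F : net -> net) : Prop :=
  exists (c : net) (a : nat -> net),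
    moderate c /\ weakly_moderate a /\
    (forall z, moderate z -> in_conv_set a c z) /\
    (forall z, moderate z -> conv_reps a c z (F z)).

End Gen.

(* Main.v *)
Require Import Defs.
From Stdlib Require Import Reals Lra Lia FunctionalExtensionality ClassicalEpsilon Classical.
From Coquelicot Require Import Coquelicot.
Open Scope R_scope.

Definition exC (u : nat -> C) : Prop := ex_series (fun n => Cmod (u n)).

Lemma ex_series_R_le (a b : nat -> R) :
  (forall n, Rabs (a n) <= b n) -> ex_series b -> ex_series a.
Proof. intros H Hb. apply (ex_series_le a b); [exact H | exact Hb]. Qed.

Lemma ex_series_Rabs_le (a b : nat -> R) :
  (forall n, Rabs (a n) <= b n) -> ex_series b -> ex_series (fun n => Rabs (a n)).
Proof. intros H Hb. apply (ex_series_R_le _ b); auto. intros n; rewrite Rabs_Rabsolu; auto. Qed.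

Lemma im_le_Cmod (c : C) : Rabs (Im c) <= Cmod c.
Proof. pose proof (Rmax_Cmod c). unfold Im. destruct c; simpl in *.
  eapply Rle_trans; [apply Rmax_r|]; exact H. Qed.

Lemma exC_re (u : nat -> C) : exC u -> ex_series (fun n => Rabs (Re (u n))).
Proof. intros H. apply (ex_series_Rabs_le _ (fun n => Cmod (u n))); auto. intros; apply re_le_Cmod. Qed.
Lemma exC_im (u : nat -> C) : exC u -> ex_series (fun n => Rabs (Im (u n))).
Proof. intros H. apply (ex_series_Rabs_le _ (fun n => Cmod (u n))); auto. intros; apply im_le_Cmod. Qed.
Lemma exC_re' (u : nat -> C) : exC u -> ex_series (fun n => Re (u n)).
Proof. intros H; apply ex_series_Rabs, exC_re, H. Qed.
Lemma exC_im' (u : nat -> C) : exC u -> ex_series (fun n => Im (u n)).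
Proof. intros H; apply ex_series_Rabs, exC_im, H. Qed.

Lemma exC_bound (u : nat -> C) (b : nat -> R) :
  (forall n, Cmod (u n) <= b n) -> ex_series b -> exC u.
Proof. intros H Hb. unfold exC. apply (ex_series_R_le _ b); auto.
  intros n. rewrite Rabs_pos_eq; [auto | apply Cmod_ge_0]. Qed.

Lemma Cmod_le_sum (c : C) : Cmod c <= Rabs (Re c) + Rabs (Im c).
Proof. destruct c as [x y]. replace (x,y) with (Cplus (RtoC x) (Cmult (RtoC y) (0,1))).
  2:{ unfold Cplus, Cmult, RtoC; simpl; f_equal; ring. }
  eapply Rle_trans; [apply Cmod_triangle|]. rewrite Cmod_mult, !Cmod_R.
  assert (Cmod (0,1) = 1). { unfold Cmod; simpl. replace (0 * (0 * 1) + 1 * (1 * 1)) with 1 by ring. apply sqrt_1. }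
  rewrite H. unfold Re, Im; simpl.
  replace (x + (y * 0 - 0 * 1)) with x by ring. replace (0 + (y * 1 + 0 * 0)) with y by ring. lra. Qed.


Lemma Series_zero_fun : Series (fun _ => 0) = 0.
Proof. assert (H := Series_scal_l 0 (fun _ => 0)). rewrite Rmult_0_l in H. etransitivity; [|exact H]. apply Series_ext; intros; unfold Re, Im, Cplus, Cminus, Copp, Cmult; simpl; ring. Qed.
Lemma Series_nonneg (a : nat -> R) : (forall n, 0 <= a n) -> ex_series a -> 0 <= Series a.
Proof. intros H Ha. rewrite <- Series_zero_fun. apply Series_le; auto. intros; split; [lra|auto]. Qed.

Lemma exR_plus (a b : nat -> R) : ex_series a -> ex_series b -> ex_series (fun n => a n + b n).
Proof. intros Ha Hb. exact (ex_series_plus a b Ha Hb). Qed.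
Lemma exR_scal (c : R) (a : nat -> R) : ex_series a -> ex_series (fun n => c * a n).
Proof. intros Ha. exact (ex_series_scal_l c a Ha). Qed.


Lemma exR_minus (a b : nat -> R) : ex_series a -> ex_series b -> ex_series (fun n => a n - b n).
Proof. intros Ha Hb. exact (ex_series_minus a b Ha Hb). Qed.

Lemma Series_le' (a b : nat -> R) : (forall n, a n <= b n) -> ex_series a -> ex_series b -> Series a <= Series b.
Proof. intros H Ha Hb. assert (Series b - Series a >= 0); [|lra].
  rewrite <- Series_minus; auto. apply Rle_ge, Series_nonneg.
  - intros n; specialize (H n); lra.
  - apply exR_minus; auto. Qed.

Lemma Cmod_Cseries (u : nat -> C) : exC u -> Cmod (Cseries u) <= 2 * Series (fun n => Cmod (u n)).
Proof. intros H. eapply Rle_trans; [apply Cmod_le_sum|]. unfold Cseries; simpl.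
  pose proof (Series_Rabs _ (exC_re u H)) as H1.
  pose proof (Series_Rabs _ (exC_im u H)) as H2.
  assert (Series (fun n => Rabs (Re (u n))) <= Series (fun n => Cmod (u n))).
  { apply Series_le; auto. intros; split; [apply Rabs_pos|apply re_le_Cmod]. }
  assert (Series (fun n => Rabs (Im (u n))) <= Series (fun n => Cmod (u n))).
  { apply Series_le; auto. intros; split; [apply Rabs_pos|apply im_le_Cmod]. }
  unfold Re, Im in *. lra. Qed.

Lemma Cmod_Cseries_le (u : nat -> C) (b : nat -> R) :
  (forall n, Cmod (u n) <= b n) -> ex_series b -> Cmod (Cseries u) <= 2 * Series b.
Proof. intros H Hb. assert (exC u) by (eapply exC_bound; eauto).
  eapply Rle_trans; [apply Cmod_Cseries; auto|]. apply Rmult_le_compat_l; [lra|].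
  apply Series_le; auto. intros; split; auto; apply Cmod_ge_0. Qed.

Lemma C_ext (x y : C) : fst x = fst y -> snd x = snd y -> x = y.
Proof. destruct x, y; simpl; intros; subst; auto. Qed.

Ltac csimpl := unfold Cplus, Cminus, Copp, Cmult, RtoC in *; simpl in *.

Lemma exC_plus (u v : nat -> C) : exC u -> exC v -> exC (fun n => Cplus (u n) (v n)).
Proof. intros Hu Hv. apply (exC_bound _ (fun n => Cmod (u n) + Cmod (v n))).
  intros; apply Cmod_triangle. apply exR_plus; auto. Qed.
Lemma exC_scal (k : C) (u : nat -> C) : exC u -> exC (fun n => Cmult k (u n)).
Proof. intros Hu. apply (exC_bound _ (fun n => Cmod k * Cmod (u n))).
  intros; rewrite Cmod_mult; lra. apply exR_scal; auto. Qed.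
Lemma exC_minus (u v : nat -> C) : exC u -> exC v -> exC (fun n => Cminus (u n) (v n)).
Proof. intros Hu Hv. apply (exC_bound _ (fun n => Cmod (u n) + Cmod (v n))).
  intros; unfold Cminus. eapply Rle_trans; [apply Cmod_triangle|].
  rewrite Cmod_opp; lra. apply exR_plus; auto. Qed.

Lemma Cseries_plus (u v : nat -> C) : exC u -> exC v ->
  Cseries (fun n => Cplus (u n) (v n)) = Cplus (Cseries u) (Cseries v).
Proof. intros Hu Hv. pose proof (exC_re' u Hu). pose proof (exC_re' v Hv).
  pose proof (exC_im' u Hu). pose proof (exC_im' v Hv). unfold Re, Im in *.
  unfold Cseries, Re, Im. apply C_ext; simpl.
  - rewrite <- Series_plus by auto. apply Series_ext; intros; unfold Re, Im, Cplus, Cminus, Copp, Cmult; simpl; ring.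
  - rewrite <- Series_plus by auto. apply Series_ext; intros; unfold Re, Im, Cplus, Cminus, Copp, Cmult; simpl; ring. Qed.
Lemma Cseries_minus (u v : nat -> C) : exC u -> exC v ->
  Cseries (fun n => Cminus (u n) (v n)) = Cminus (Cseries u) (Cseries v).
Proof. intros Hu Hv. pose proof (exC_re' u Hu). pose proof (exC_re' v Hv).
  pose proof (exC_im' u Hu). pose proof (exC_im' v Hv). unfold Re, Im in *.
  unfold Cseries, Re, Im. apply C_ext; simpl.
  - transitivity (Series (fun n => fst (u n)) - Series (fun n => fst (v n))); [|unfold Cminus, Cplus, Copp; simpl; ring].
    rewrite <- Series_minus by auto. apply Series_ext; intros; unfold Re, Im, Cplus, Cminus, Copp, Cmult; simpl; ring.
  - transitivity (Series (fun n => snd (u n)) - Series (fun n => snd (v n))); [|unfold Cminus, Cplus, Copp; simpl; ring].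
    rewrite <- Series_minus by auto. apply Series_ext; intros; unfold Re, Im, Cplus, Cminus, Copp, Cmult; simpl; ring. Qed.
Lemma Cseries_scal (k : C) (u : nat -> C) : exC u ->
  Cseries (fun n => Cmult k (u n)) = Cmult k (Cseries u).
Proof. intros Hu. pose proof (exC_re' u Hu). pose proof (exC_im' u Hu). unfold Re, Im in *.
  unfold Cseries, Re, Im. destruct k as [k1 k2]. apply C_ext; simpl.
  - rewrite <- !Series_scal_l, <- Series_minus. apply Series_ext; intros; unfold Re, Im, Cplus, Cminus, Copp, Cmult; simpl; ring.
    apply exR_scal; auto. apply exR_scal; auto.
  - rewrite <- !Series_scal_l, <- Series_plus. apply Series_ext; intros; unfold Re, Im, Cplus, Cminus, Copp, Cmult; simpl; ring.
    apply exR_scal; auto. apply exR_scal; auto. Qed.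

Lemma Cseries_ext (u v : nat -> C) : (forall n, u n = v n) -> Cseries u = Cseries v.
Proof. intros H. replace u with v; auto. extensionality n; auto. Qed.

Lemma Cseries_shift (u : nat -> C) : exC u -> Cseries u = Cplus (u 0%nat) (Cseries (fun n => u (S n))).
Proof. intros Hu. unfold Cseries, Re, Im. apply C_ext; simpl.
  - apply Series_incr_1, exC_re'; auto.
  - apply Series_incr_1, exC_im'; auto. Qed.

Lemma Cseries_prefix0 (u : nat -> C) (n : nat) : (forall k, (k < n)%nat -> u k = RtoC 0) ->
  Cseries u = Cseries (fun k => u (n + k)%nat).
Proof. intros H. unfold Cseries, Re, Im. apply C_ext; simpl.
  - apply (Series_incr_n_aux (fun k => fst (u k))). intros k Hk; rewrite H; auto.
  - apply (Series_incr_n_aux (fun k => snd (u k))). intros k Hk; rewrite H; auto. Qed.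

Lemma Cseries_zero : Cseries (fun _ => RtoC 0) = RtoC 0.
Proof. unfold Cseries; simpl. rewrite Series_zero_fun. reflexivity. Qed.

Fixpoint fsum (K : nat) (f : nat -> C) : C :=
  match K with O => RtoC 0 | S k => Cplus (fsum k f) (f k) end.

Lemma Cmod_fsum_le (K : nat) (f : nat -> C) (b : R) :
  (forall j, Cmod (f j) <= b) -> Cmod (fsum K f) <= INR K * b.
Proof. intros H. induction K; simpl fsum. rewrite Cmod_0; simpl; lra.
  eapply Rle_trans; [apply Cmod_triangle|]. rewrite S_INR. specialize (H K). lra. Qed.

Lemma fsum_ext (K : nat) (f g : nat -> C) : (forall j, f j = g j) -> fsum K f = fsum K g.
Proof. intros H; induction K; simpl; auto. rewrite IHK, H; auto. Qed.

Lemma fsum_scal (K : nat) (k : C) (f : nat -> C) : fsum K (fun j => Cmult k (f j)) = Cmult k (fsum K f).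
Proof. induction K; simpl. apply C_ext; simpl; ring. rewrite IHK. ring. Qed.

Lemma fsum_Cseries (K : nat) (u : nat -> nat -> C) (y : nat -> R) :
  (forall j m, Cmod (u j m) <= y m) -> ex_series y ->
  fsum K (fun j => Cseries (u j)) = Cseries (fun m => fsum K (fun j => u j m)).
Proof. intros H Hy. induction K; simpl.
  - symmetry; apply Cseries_zero.
  - rewrite IHK. rewrite <- Cseries_plus; auto.
    + apply (exC_bound _ (fun m => INR K * y m)).
      * intros m; apply Cmod_fsum_le; auto.
      * apply exR_scal; auto.
    + apply (exC_bound _ y); auto. Qed.

Lemma fsum_const1 (K : nat) : fsum K (fun j => Cpow 1 j) = RtoC (INR K).
Proof. induction K; simpl fsum. auto. rewrite IHK, Cpow_1_l, S_INR. apply C_ext; simpl; ring. Qed.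

Lemma geom_fsum (q : C) (K : nat) : Cmult (Cminus q 1) (fsum K (fun j => Cpow q j)) = Cminus (Cpow q K) 1.
Proof. induction K; simpl. apply C_ext; simpl; ring.
  rewrite Cmult_plus_distr_l, IHK. ring. Qed.

Lemma geom_zero (q : C) (K : nat) : q <> RtoC 1 -> Cpow q K = RtoC 1 -> fsum K (fun j => Cpow q j) = RtoC 0.
Proof. intros H1 H2. pose proof (geom_fsum q K) as G. rewrite H2 in G.
  replace (Cminus 1 1) with (RtoC 0) in G by ring.
  assert (Cminus q 1 <> RtoC 0). { intros E; apply H1. replace q with (Cplus (Cminus q 1) 1) by ring. rewrite E; ring. }
  replace (fsum K (fun j => Cpow q j)) with (Cmult (Cinv (Cminus q 1)) (Cmult (Cminus q 1) (fsum K (fun j => Cpow q j)))).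
  rewrite G; ring. field; auto. Qed.

Definition om (K : nat) : C := (cos (2*PI/INR K), sin (2*PI/INR K)).

Lemma om_pow (K j : nat) : Cpow (om K) j = (cos (INR j * (2*PI/INR K)), sin (INR j * (2*PI/INR K))).
Proof. induction j; simpl Cpow.
  - simpl. rewrite Rmult_0_l, cos_0, sin_0. auto.
  - rewrite IHj, S_INR. unfold om, Cmult; simpl.
    replace ((INR j + 1) * (2 * PI / INR K)) with (2*PI/INR K + INR j * (2 * PI / INR K)) by ring.
    rewrite cos_plus, sin_plus. f_equal; ring. Qed.

Lemma Cmod_cs (x : R) : Cmod (cos x, sin x) = 1.
Proof. unfold Cmod; simpl. replace (cos x * (cos x * 1) + sin x * (sin x * 1)) with 1. apply sqrt_1. pose proof (sin2_cos2 x). unfold Rsqr in H. nra. Qed.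

Lemma Cmod_om_pow (K j : nat) : Cmod (Cpow (om K) j) = 1.
Proof. rewrite om_pow. apply Cmod_cs. Qed.

Lemma om_K (K : nat) : (0 < K)%nat -> Cpow (om K) K = RtoC 1.
Proof. intros HK. rewrite om_pow. replace (INR K * (2 * PI / INR K)) with (2*PI).
  rewrite cos_2PI, sin_2PI. auto. field. apply not_0_INR; lia. Qed.

Lemma om_ne1 (K r : nat) : (0 < r < K)%nat -> Cpow (om K) r <> RtoC 1.
Proof. intros Hr E. rewrite om_pow in E. unfold RtoC in E. injection E; intros Es Ec.
  set (x := INR r * (2 * PI / INR K)) in *.
  assert (HK : 0 < INR K) by (apply lt_0_INR; lia).
  assert (Hr1 : 0 < INR r) by (apply lt_0_INR; lia).
  assert (Hr2 : INR r < INR K) by (apply lt_INR; lia).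
  pose proof PI_RGT_0.
  assert (0 < x). { unfold x. apply Rmult_lt_0_compat; auto. unfold Rdiv; apply Rmult_lt_0_compat; [lra|]. apply Rinv_0_lt_compat; auto. }
  assert (x < 2*PI). { unfold x. replace (INR r * (2 * PI / INR K)) with ((2*PI) * (INR r / INR K)) by (field; lra).
    assert (INR r / INR K < 1). { apply (Rmult_lt_reg_r (INR K)); auto. unfold Rdiv; rewrite Rmult_assoc, Rinv_l; lra. }
    nra. }
  destruct (Rtotal_order x PI) as [H3|[H3|H3]].
  - pose proof (sin_gt_0 x H0 H3). lra.
  - rewrite H3, cos_PI in Ec. lra.
  - pose proof (sin_lt_0 x H3 H1). lra. Qed.

Lemma tail_small (x : nat -> R) : ex_series x -> forall eps, 0 < eps ->
  exists N0, forall N, (N0 <= N)%nat -> Series (fun k => x (N + k)%nat) <= eps.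
Proof. intros Hx eps He. pose proof (Series_correct _ Hx) as Hs.
  apply is_series_Reals in Hs. destruct (Hs eps He) as [N0 HN].
  exists (S N0). intros N HN0.
  pose proof (Series_incr_n x N ltac:(lia) Hx) as E.
  specialize (HN (pred N) ltac:(lia)). unfold Rdist in HN.
  pose proof (Rabs_def2 _ _ HN). lra. Qed.

Lemma Cmod_RtoC_pos (r : R) : 0 <= r -> Cmod (RtoC r) = r.
Proof. intros; rewrite Cmod_R, Rabs_pos_eq; auto. Qed.

Lemma cauchy_est (b : nat -> C) (Sr B : R) : 0 < Sr ->
  ex_series (fun m => Cmod (b m) * Sr ^ m) ->
  (forall x, Cmod x = Sr -> Cmod (Cseries (fun m => Cmult (b m) (Cpow x m))) <= B) ->
  forall n, Cmod (b n) * Sr ^ n <= B.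
Proof.
  intros HS Hx HB n. set (x := fun m => Cmod (b m) * Sr ^ m) in *.
  apply Rle_plus_epsilon. intros eps He.
  destruct (tail_small x Hx (eps/2) ltac:(lra)) as [N0 HN0].
  set (K := (N0 + n + 1)%nat).
  assert (HKn : (n < K)%nat) by lia.
  assert (HKpos : 0 < INR K) by (apply lt_0_INR; lia).
  set (w := om K).
  assert (Hw : forall j, Cmod (Cpow w j) = 1) by (intros; apply Cmod_om_pow).
  assert (Hw2 : forall e j, Cmod (Cpow (Cpow w e) j) = 1) by (intros; rewrite Cmod_pow, Hw; apply pow1).
  set (p := fun j => Cmult (RtoC Sr) (Cpow w j)).
  assert (Hp : forall j, Cmod (p j) = Sr).
  { intros; unfold p; rewrite Cmod_mult, Hw, Cmod_RtoC_pos; lra. }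
  assert (Hxm : forall m, 0 <= x m).
  { intros; unfold x. apply Rmult_le_pos; [apply Cmod_ge_0| apply pow_le; lra]. }
  set (T := fsum K (fun j => Cmult (Cpow (Cpow w (K - n)) j) (Cseries (fun m => Cmult (b m) (Cpow (p j) m))))).
  assert (HT : Cmod T <= INR K * B).
  { apply Cmod_fsum_le. intros j. rewrite Cmod_mult, Hw2, Rmult_1_l. apply HB, Hp. }
  assert (Hterm : forall j m, Cmult (Cpow (Cpow w (K-n)) j) (Cmult (b m) (Cpow (p j) m)) =
     Cmult (Cmult (b m) (RtoC (Sr ^ m))) (Cpow (Cpow w (m + K - n)) j)).
  { intros j m. unfold p. rewrite Cpow_mult_l, <- RtoC_pow. rewrite <- !Cpow_mult_r.
    replace ((m + K - n) * j)%nat with (j * m + (K - n) * j)%nat by nia.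
    rewrite Cpow_add_r. ring. }
  assert (Hbt : forall j m, Cmod (Cmult (Cpow (Cpow w (K-n)) j) (Cmult (b m) (Cpow (p j) m))) <= x m).
  { intros j m. rewrite !Cmod_mult, Hw2, Cmod_pow, Hp. unfold x; lra. }
  set (W := fun m => fsum K (fun j => Cpow (Cpow w (m + K - n)) j)).
  set (v := fun m => Cmult (Cmult (b m) (RtoC (Sr ^ m))) (W m)).
  assert (HT2 : T = Cseries v).
  { unfold T. rewrite (fsum_ext K _ (fun j => Cseries (fun m => Cmult (Cpow (Cpow w (K-n)) j) (Cmult (b m) (Cpow (p j) m))))).
    2: { intros j. rewrite Cseries_scal; auto. apply (exC_bound _ x); auto.
         intros m. rewrite Cmod_mult, Cmod_pow, Hp. unfold x; lra. }
    rewrite (fsum_Cseries K _ x); auto.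
    apply Cseries_ext; intros m. unfold v, W.
    rewrite (fsum_ext K _ (fun j => Cmult (Cmult (b m) (RtoC (Sr ^ m))) (Cpow (Cpow w (m + K - n)) j))) by (intros; apply Hterm).
    apply fsum_scal. }
  assert (HwK : Cpow w K = RtoC 1) by (apply om_K; lia).
  assert (HWn : W n = RtoC (INR K)).
  { unfold W. replace (n + K - n)%nat with K by lia. rewrite HwK. apply fsum_const1. }
  assert (HW0 : forall m, (m < n + K)%nat -> m <> n -> W m = RtoC 0).
  { intros m Hm Hmn. unfold W. apply geom_zero.
    - destruct (Nat.lt_ge_cases (m + K - n) K) as [Hl|Hl].
      + apply om_ne1; lia.
      + replace (m + K - n)%nat with (K + (m - n))%nat by lia. rewrite Cpow_add_r, HwK.
        rewrite Cmult_1_l. apply om_ne1; lia.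
    - rewrite <- Cpow_mult_r. rewrite Nat.mul_comm, Cpow_mult_r, HwK. apply Cpow_1_l. }
  assert (HWb : forall m, Cmod (W m) <= INR K).
  { intros m. unfold W. rewrite <- (Rmult_1_r (INR K)). apply Cmod_fsum_le.
    intros j. rewrite Hw2. lra. }
  assert (Hvb : forall m, Cmod (v m) <= INR K * x m).
  { intros m. unfold v. rewrite !Cmod_mult, Cmod_RtoC_pos by (apply pow_le; lra).
    specialize (HWb m). unfold x. pose proof (Cmod_ge_0 (b m)). pose proof (pow_le Sr m ltac:(lra)).
    rewrite (Rmult_comm (INR K)). apply Rmult_le_compat_l; auto. apply Rmult_le_pos; auto. }
  assert (HexK : ex_series (fun m => INR K * x m)) by (apply exR_scal; auto).
  set (bump := fun m => if Nat.eq_dec m n then v n else RtoC 0).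
  set (v' := fun m => if Nat.eq_dec m n then RtoC 0 else v m).
  assert (Hbb : forall m, Cmod (bump m) <= INR K * x m).
  { intros m; unfold bump; destruct (Nat.eq_dec m n); [subst; auto|]. rewrite Cmod_0. specialize (Hxm m); nra. }
  assert (Hvb' : forall m, Cmod (v' m) <= INR K * x m).
  { intros m; unfold v'; destruct (Nat.eq_dec m n); [|auto]. rewrite Cmod_0. specialize (Hxm m); nra. }
  assert (Hsplit : Cseries v = Cplus (Cseries bump) (Cseries v')).
  { rewrite <- Cseries_plus. apply Cseries_ext; intros m. unfold bump, v'.
    destruct (Nat.eq_dec m n); [subst; ring| ring].
    apply (exC_bound _ _ Hbb HexK). apply (exC_bound _ _ Hvb' HexK). }
  assert (Hbump : Cseries bump = v n).
  { rewrite (Cseries_prefix0 bump n).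
    2: { intros k Hk. unfold bump. destruct (Nat.eq_dec k n); [lia|auto]. }
    rewrite Cseries_shift.
    - rewrite (Cseries_ext _ (fun _ => RtoC 0)), Cseries_zero.
      + unfold bump. rewrite Nat.add_0_r. destruct (Nat.eq_dec n n); [|lia]. ring.
      + intros k. unfold bump. destruct (Nat.eq_dec (n + Datatypes.S k) n); [lia|auto].
    - apply (exC_bound _ (fun k => INR K * x (n + k)%nat)). intros; apply Hbb.
      apply exR_scal. apply (ex_series_incr_n x n). auto. }
  assert (Hv' : Cmod (Cseries v') <= INR K * eps).
  { rewrite (Cseries_prefix0 v' (n + K)).
    2: { intros k Hk. unfold v'. destruct (Nat.eq_dec k n); auto. unfold v. rewrite HW0 by auto. ring. }
    eapply Rle_trans. apply (Cmod_Cseries_le _ (fun k => INR K * x (n + K + k)%nat)).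
    - intros; apply Hvb'.
    - apply exR_scal. apply (ex_series_incr_n x (n + K)). auto.
    - rewrite Series_scal_l. specialize (HN0 (n + K)%nat ltac:(lia)). nra. }
  assert (Hvn : Cmod (v n) = INR K * x n).
  { unfold v. rewrite HWn, !Cmod_mult, !Cmod_RtoC_pos; try lra. unfold x; ring. apply pow_le; lra. }
  assert (Cmod (v n) <= INR K * B + INR K * eps).
  { replace (v n) with (Cminus T (Cseries v')) by (rewrite HT2, Hsplit, Hbump; ring).
    unfold Cminus. eapply Rle_trans; [apply Cmod_triangle|]. rewrite Cmod_opp. lra. }
  rewrite Hvn in H. unfold x in *. apply (Rmult_le_reg_l (INR K)); auto. rewrite Rmult_plus_distr_l. lra.
Qed.

Lemma weighted_geom (q : R) : 0 < q < 1 -> ex_series (fun n => INR (S n) * q ^ n).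
Proof. intros Hq.
  assert (H := ex_series_DAlembert (fun n => INR (S n) * q ^ n) q ltac:(lra)).
  apply ex_series_Rabs. apply H.
  - intros n. cbv beta. intros E. apply Rmult_integral in E. destruct E as [E|E]; [revert E; apply not_0_INR; lia | revert E; apply pow_nonzero; lra].
  - apply is_lim_seq_ext with (fun n => (1 + / INR (S n)) * q).
    + intros n. rewrite Rabs_pos_eq.
      * rewrite (S_INR (S n)). simpl pow. field. repeat split; try (apply not_0_INR; lia); try (apply pow_nonzero; lra).
      * unfold Rdiv. apply Rmult_le_pos. apply Rmult_le_pos; [apply pos_INR| apply pow_le; lra].
        apply Rlt_le, Rinv_0_lt_compat. apply Rmult_lt_0_compat; [apply lt_0_INR; lia| apply pow_lt; lra].
    + replace (Finite q) with (Finite ((1 + 0) * q)) by (f_equal; ring). apply is_lim_seq_mult'; [|apply is_lim_seq_const].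
      apply is_lim_seq_plus'; [apply is_lim_seq_const|].
      assert (Hl := is_lim_seq_inv _ _ (proj1 (is_lim_seq_incr_1 INR p_infty) is_lim_seq_INR) ltac:(discriminate)).
      exact Hl.
Qed.

Lemma nroot_bound (x c : R) (n : nat) : (1 <= n)%nat -> 0 <= x -> 0 < c -> nroot x n < c -> x <= c ^ n.
Proof. intros Hn Hx Hc H. unfold nroot in H. destruct (Req_EM_T x 0) as [E|E].
  - subst. apply pow_le; lra.
  - assert (Hx' : 0 < x) by lra.
    assert (Hy : 0 < Rpower x (/ INR n)) by (unfold Rpower; apply exp_pos).
    replace x with (Rpower (Rpower x (/ INR n)) (INR n)).
    + rewrite Rpower_pow by auto. apply pow_incr; lra.
    + rewrite Rpower_mult, Rinv_l, Rpower_1; auto. apply not_0_INR; lia. Qed.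

Lemma nroot_nonneg (x : R) (n : nat) : 0 <= nroot x n.
Proof. unfold nroot. destruct (Req_EM_T x 0); [lra|]. unfold Rpower; apply Rlt_le, exp_pos. Qed.

Lemma limsup_eventually (u : nat -> R) (t : R) : 0 < t -> (forall n, 0 <= u n) ->
  Rbar_lt (Finite t) (Rbar_inv0 (LimSup_seq u)) ->
  forall c, / t < c -> exists N, forall n, (N <= n)%nat -> u n < c.
Proof. intros Ht Hu H c Hc.
  assert (HL : is_LimSup_seq u (LimSup_seq u)) by (unfold LimSup_seq; destruct (ex_LimSup_seq u); auto).
  assert (Hc0 : 0 < c) by (pose proof (Rinv_0_lt_compat t Ht); lra).
  destruct (LimSup_seq u) as [l| |] eqn:EL; simpl in H.
  - destruct (Req_EM_T l 0) as [E|E].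
    + subst. destruct (HL (mkposreal c Hc0)) as [_ [N HN]]. exists N. intros n Hn. specialize (HN n Hn). simpl in HN. lra.
    + simpl in H.
      assert (Hl : 0 < l).
      { destruct (Rtotal_order l 0) as [Hl|[Hl|Hl]]; [|lra|lra].
        pose proof (Rinv_lt_0_compat l Hl). lra. }
      assert (l < / t). { apply (Rmult_lt_reg_l t); auto. rewrite Rinv_r by lra.
        apply (Rmult_lt_reg_r (/ l)). apply Rinv_0_lt_compat; auto. rewrite Rmult_assoc, Rinv_r, Rmult_1_l, Rmult_1_r by lra. auto. }
      assert (He : 0 < c - l) by lra.
      destruct (HL (mkposreal _ He)) as [_ [N HN]]. exists N. intros n Hn. specialize (HN n Hn). simpl in HN. lra.
  - lra.
  - destruct (HL c) as [N HN]. exists N. auto.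
Qed.

Lemma root_test (A : nat -> C) (t s : R) : 0 <= s < t ->
  Rbar_lt (Finite t) (Rbar_inv0 (LimSup_seq (fun n => nroot (Cmod (A n)) n))) ->
  ex_series (fun n => INR (S n) * Cmod (A n) * s ^ n).
Proof. intros Hs H. set (t' := (s + t) / 2).
  assert (Ht' : 0 < t') by (unfold t'; lra).
  destruct (limsup_eventually _ t ltac:(lra) (fun n => nroot_nonneg _ _) H (/ t')) as [N HN].
  { apply Rinv_lt_contravar. apply Rmult_lt_0_compat; lra. unfold t'; lra. }
  set (q := (1 + s / t') / 2).
  assert (Hst : s / t' < 1). { apply (Rmult_lt_reg_r t'); auto. unfold Rdiv; rewrite Rmult_assoc, Rinv_l by lra. unfold t'; lra. }
  assert (Hst0 : 0 <= s / t') by (unfold Rdiv; apply Rmult_le_pos; [lra|apply Rlt_le, Rinv_0_lt_compat; auto]).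
  assert (Hq : 0 < q < 1) by (unfold q; lra).
  apply (ex_series_incr_n _ (S N)).
  apply (ex_series_R_le _ (fun k => INR (S (S N + k)) * q ^ (S N + k))).
  - intros k. set (n := (S N + k)%nat). rewrite Rabs_pos_eq.
    2: { apply Rmult_le_pos; [apply Rmult_le_pos; [apply pos_INR|apply Cmod_ge_0]|apply pow_le; lra]. }
    rewrite Rmult_assoc. apply Rmult_le_compat_l; [apply pos_INR|].
    assert (HA : Cmod (A n) <= (/ t') ^ n).
    { apply nroot_bound. unfold n; lia. apply Cmod_ge_0. apply Rinv_0_lt_compat; auto. apply HN; unfold n; lia. }
    eapply Rle_trans. apply Rmult_le_compat_r. apply pow_le; lra. exact HA.
    rewrite <- Rpow_mult_distr. apply pow_incr. split.
    + apply Rmult_le_pos; [apply Rlt_le, Rinv_0_lt_compat; auto| lra].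
    + unfold Rdiv in q. unfold q. rewrite Rmult_comm. unfold Rdiv in Hst. lra.
  - apply (ex_series_incr_n (fun n => INR (S n) * q ^ n) (S N)). apply weighted_geom; auto.
Qed.

Lemma pow_le1 (x : R) (n : nat) : 0 <= x <= 1 -> x ^ n <= 1.
Proof. intros H. rewrite <- (pow1 n). apply pow_incr; lra. Qed.

Lemma ev_and (P Q : R -> Prop) : eventually0 P -> eventually0 Q -> eventually0 (fun e => P e /\ Q e).
Proof. intros [a [Ha HP]] [b [Hb HQ]]. exists (Rmin a b). split.
  split; [apply Rmin_pos; lra| eapply Rle_trans; [apply Rmin_l|lra]].
  intros e He. pose proof (Rmin_l a b). pose proof (Rmin_r a b). split; [apply HP|apply HQ]; lra. Qed.

Lemma ev_mono (P Q : R -> Prop) : (forall e, 0 < e <= 1 -> P e -> Q e) -> eventually0 P -> eventually0 Q.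
Proof. intros H [a [Ha HP]]. exists a. split; auto. intros e He. apply H; [lra|]. apply HP; auto. Qed.

Lemma ev_true (P : R -> Prop) : (forall e, 0 < e <= 1 -> P e) -> eventually0 P.
Proof. intros H. exists 1. split; [lra|]. auto. Qed.

Lemma unif (Q : R -> C -> Prop) (phi : R -> C -> nat -> Prop) :
  (forall e, Q e (RtoC 0)) ->
  (forall e x p q, (p <= q)%nat -> phi e x p -> phi e x q) ->
  (forall w : net, (forall e, Q e (w e)) -> exists p, eventually0 (fun e => phi e (w e) p)) ->
  exists p, eventually0 (fun e => forall x, Q e x -> phi e x p).
Proof.
  intros HQ0 Hmono Hw. apply NNPP. intros Hn.
  assert (Hbad : forall p e0, 0 < e0 <= 1 -> exists ex : R * C,
     0 < fst ex <= e0 /\ Q (fst ex) (snd ex) /\ ~ phi (fst ex) (snd ex) p).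
  { intros p e0 He0. apply NNPP; intros H. apply Hn. exists p. exists e0. split; auto.
    intros e He x Hx. apply NNPP; intros Hp. apply H. exists (e, x). simpl. auto. }
  set (g := fun p e0 => epsilon (inhabits (0, RtoC 0)) (fun ex : R * C =>
     0 < fst ex <= e0 /\ Q (fst ex) (snd ex) /\ ~ phi (fst ex) (snd ex) p)).
  assert (Hg : forall p e0, 0 < e0 <= 1 -> 0 < fst (g p e0) <= e0 /\ Q (fst (g p e0)) (snd (g p e0)) /\ ~ phi (fst (g p e0)) (snd (g p e0)) p).
  { intros p e0 He0. unfold g. apply epsilon_spec. apply Hbad; auto. }
  set (sq := fix sq (k : nat) : R * C := match k with O => g O 1 | S k => g (S k) (fst (sq k) / 2) end).
  assert (Hsq : forall k, (0 < fst (sq k) <= (1/2) ^ k) /\ Q (fst (sq k)) (snd (sq k)) /\ ~ phi (fst (sq k)) (snd (sq k)) k).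
  { induction k.
    - simpl. destruct (Hg O 1 ltac:(lra)) as [H1 [H2 H3]]. simpl in H1. repeat split; auto; lra.
    - destruct IHk as [[H1 H1'] _].
      assert (Hk1 : (1/2)^k <= 1) by (apply pow_le1; lra).
      destruct (Hg (S k) (fst (sq k) / 2) ltac:(lra)) as [H2 [H3 H4]].
      change (sq (S k)) with (g (S k) (fst (sq k) / 2)). repeat split; auto; try lra.
      simpl pow. lra. }
  assert (Hdec : forall k l, (k < l)%nat -> fst (sq l) < fst (sq k)).
  { intros k l Hkl. induction Hkl.
    - destruct (Hsq k) as [[H1 H1'] _].
      assert (Hk1 : (1/2)^k <= 1) by (apply pow_le1; lra).
      destruct (Hg (S k) (fst (sq k) / 2) ltac:(lra)) as [H2 _].
      change (sq (S k)) with (g (S k) (fst (sq k) / 2)). lra.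
    - destruct (Hsq m) as [[H1 H1'] _].
      assert (Hk1 : (1/2)^m <= 1) by (apply pow_le1; lra).
      destruct (Hg (S m) (fst (sq m) / 2) ltac:(lra)) as [H2 _].
      change (sq (S m)) with (g (S m) (fst (sq m) / 2)). lra. }
  assert (Hinj : forall k l, fst (sq k) = fst (sq l) -> k = l).
  { intros k l E. destruct (Nat.lt_trichotomy k l) as [H|[H|H]]; auto.
    apply Hdec in H; lra. apply Hdec in H; lra. }
  set (w := fun e => match excluded_middle_informative (exists k, fst (sq k) = e) with
        | left H => snd (sq (proj1_sig (constructive_indefinite_description _ H)))
        | right _ => RtoC 0 end).
  assert (Hwk : forall k, w (fst (sq k)) = snd (sq k)).
  { intros k. unfold w. destruct (excluded_middle_informative _) as [H|H].
    - destruct (constructive_indefinite_description _ H) as [l Hl]. simpl. apply Hinj in Hl. subst; auto.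
    - exfalso; apply H; eauto. }
  assert (HwQ : forall e, Q e (w e)).
  { intros e. unfold w. destruct (excluded_middle_informative _) as [H|H]; auto.
    destruct (constructive_indefinite_description _ H) as [l Hl]. simpl. subst e. apply Hsq. }
  destruct (Hw w HwQ) as [p [e0 [He0 Hph]]].
  destruct (pow_lt_1_zero (1/2) ltac:(rewrite Rabs_pos_eq; lra) e0 ltac:(lra)) as [N HN].
  set (k := Nat.max N p).
  destruct (Hsq k) as [[H1 H1'] [_ H3]].
  apply H3. apply (Hmono _ _ p). unfold k; lia.
  rewrite <- Hwk. apply Hph. split; auto.
  specialize (HN k ltac:(unfold k; lia)). rewrite Rabs_pos_eq in HN by (apply pow_le; lra). lra.
Qed.

Lemma Cpow_eq (z : C) (n : nat) : Defs.Cpow z n = Complex.Cpow z n.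
Proof. induction n; simpl; auto; rewrite IHn; auto. Qed.

Lemma gauge_pos (rho : rnet) : is_gauge rho -> forall e, 0 < e <= 1 -> 0 < rho e <= 1.
Proof. intros [H _]; auto. Qed.

Lemma gauge_small (rho : rnet) (d : R) : is_gauge rho -> 0 < d ->
  eventually0 (fun e => 0 < rho e <= 1 /\ rho e < d).
Proof. intros [H1 H2] Hd. destruct (H2 d Hd) as [e0 [He0 H]].
  exists (Rmin e0 1). split. split; [apply Rmin_pos; lra| apply Rmin_r].
  intros e He. pose proof (Rmin_l e0 1). pose proof (Rmin_r e0 1). split.
  apply H1; lra. apply H; lra. Qed.

Lemma inv_pow_ge1 (r : R) (N : nat) : 0 < r <= 1 -> 1 <= / r ^ N.
Proof. intros Hr. rewrite <- Rinv_1. apply Rinv_le_contravar. apply pow_lt; lra. apply pow_le1; lra. Qed.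

Lemma inv_pow_S (r : R) (N : nat) : 0 < r -> / r ^ S N = / r ^ N * / r.
Proof. intros Hr. simpl. rewrite Rinv_mult. ring. Qed.

Lemma inv_pow_mono (r : R) (N M : nat) : 0 < r <= 1 -> (N <= M)%nat -> / r ^ N <= / r ^ M.
Proof. intros Hr HNM. apply Rinv_le_contravar. apply pow_lt; lra.
  replace M with (N + (M - N))%nat by lia. rewrite pow_add.
  pose proof (pow_le1 r (M - N) ltac:(lra)). pose proof (pow_lt r N ltac:(lra)). pose proof (pow_lt r (M-N) ltac:(lra)). nra. Qed.

Lemma pow_mono_dec (r : R) (N M : nat) : 0 < r <= 1 -> (N <= M)%nat -> r ^ M <= r ^ N.
Proof. intros Hr HNM. replace M with (N + (M - N))%nat by lia. rewrite pow_add.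
  pose proof (pow_le1 r (M - N) ltac:(lra)). pose proof (pow_lt r N ltac:(lra)). nra. Qed.

Lemma pow_inv_cancel (r : R) (n N d r0 : nat) : 0 < r ->
  r ^ (n * (N + d) + r0) * (/ r ^ N) ^ n = r ^ r0 * (r ^ d) ^ n.
Proof. intros Hr. rewrite pow_add, Nat.mul_add_distr_l, pow_add, (Nat.mul_comm n N), (Nat.mul_comm n d), !pow_mult.
  rewrite pow_inv. assert (0 < (r ^ N) ^ n) by (apply pow_lt, pow_lt; auto).
  field. lra. Qed.

Lemma INR_S_le (n : nat) : INR (S n) <= 2 ^ n.
Proof. induction n. simpl; lra. rewrite S_INR. pose proof (pow_R1_Rle 2 n ltac:(lra)). simpl pow. lra. Qed.

Lemma Series_half : Series (fun n => (1/2) ^ n) = 2.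
Proof. apply is_series_unique. assert (H := is_series_geom (1/2) ltac:(rewrite Rabs_pos_eq; lra)).
  replace (/ (1 - 1/2)) with 2 in H by field. exact H. Qed.

Lemma ex_half : ex_series (fun n => (1/2) ^ n).
Proof. exists (/ (1 - 1/2)). apply is_series_geom. rewrite Rabs_pos_eq; lra. Qed.

Lemma Cseries_geom_bound (u : nat -> C) (K : R) :
  (forall n, Cmod (u n) <= K * (1/2) ^ n) -> Cmod (Cseries u) <= 4 * K.
Proof. intros H. eapply Rle_trans. apply (Cmod_Cseries_le u (fun n => K * (1/2)^n)); auto.
  apply exR_scal, ex_half. rewrite Series_scal_l. change (Series (pow (1 / 2))) with (Series (fun n => (1/2)^n)). rewrite Series_half. lra. Qed.

Lemma exC_geom (u : nat -> C) (K : R) : (forall n, Cmod (u n) <= K * (1/2) ^ n) -> exC u.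
Proof. intros H. apply (exC_bound _ _ H). apply exR_scal, ex_half. Qed.

Lemma Cpow_diff (x y : C) (s : R) (n : nat) : Cmod x <= s -> Cmod y <= s ->
  Cmod (Cminus (Cpow x (S n)) (Cpow y (S n))) <= INR (S n) * s ^ n * Cmod (Cminus x y).
Proof. intros Hx Hy. assert (Hs : 0 <= s) by (pose proof (Cmod_ge_0 x); lra).
  induction n.
  - simpl. replace (Cminus (Cmult x 1) (Cmult y 1)) with (Cminus x y) by ring. lra.
  - replace (Cminus (Cpow x (S (S n))) (Cpow y (S (S n)))) with
      (Cplus (Cmult x (Cminus (Cpow x (S n)) (Cpow y (S n)))) (Cmult (Cpow y (S n)) (Cminus x y))) by (simpl; ring).
    eapply Rle_trans; [apply Cmod_triangle|]. rewrite !Cmod_mult, Cmod_pow.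
    pose proof (Cmod_ge_0 (Cminus x y)). pose proof (Cmod_ge_0 (Cminus (Cpow x (S n)) (Cpow y (S n)))).
    assert (Cmod y ^ S n <= s ^ S n) by (apply pow_incr; split; [apply Cmod_ge_0|auto]).
    assert (Cmod x * Cmod (Cminus (Cpow x (S n)) (Cpow y (S n))) <= s * (INR (S n) * s ^ n * Cmod (Cminus x y))).
    { apply Rmult_le_compat; auto. apply Cmod_ge_0. }
    rewrite (S_INR (S n)). simpl pow in *. nra. Qed.

Lemma Rbar_lt_le_trans' (x y : R) (z : Rbar) : x <= y -> Rbar_lt (Finite y) z -> Rbar_lt (Finite x) z.
Proof. intros H1 H2. destruct z; simpl in *; auto. lra. Qed.

Definition gfn (a : nat -> net) (e : R) (x : C) : C := Cseries (fun n => Cmult (a n e) (Cpow x n)).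
Definition Dco (a : nat -> net) (n : nat) (e : R) : C := Cmult (RtoC (INR (S n))) (a (S n) e).
Definition Dfn (a : nat -> net) (e : R) (x : C) : C := Cseries (fun n => Cmult (Dco a n e) (Cpow x n)).

Lemma inv_pow_double (r : R) (K : nat) : 0 < r <= 1/2 -> 2 * / r ^ K <= / r ^ S K.
Proof. intros Hr. rewrite inv_pow_S by lra. pose proof (inv_pow_ge1 r K ltac:(lra)).
  assert (2 <= / r). { replace 2 with (/ (1/2)) by field. apply Rinv_le_contravar; lra. } nra. Qed.

Lemma inv_pow_sum (r : R) (A B : nat) : 0 < r <= 1/2 -> / r ^ A + / r ^ B <= / r ^ S (Nat.max A B).
Proof. intros Hr. pose proof (inv_pow_double r (Nat.max A B) Hr).
  pose proof (inv_pow_mono r A (Nat.max A B) ltac:(lra) ltac:(lia)).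
  pose proof (inv_pow_mono r B (Nat.max A B) ltac:(lra) ltac:(lia)). lra. Qed.

Lemma mod_plus (rho : rnet) (x y : net) : is_gauge rho -> moderate rho x -> moderate rho y ->
  moderate rho (fun e => Cplus (x e) (y e)).
Proof. intros Hg [A HA] [B HB]. exists (S (Nat.max A B)).
  apply (ev_mono (fun e => (Cmod (x e) <= / rho e ^ A /\ Cmod (y e) <= / rho e ^ B) /\ (0 < rho e <= 1 /\ rho e < 1/2))).
  - intros e He [[H1 H2] [H3 H4]]. eapply Rle_trans; [apply Cmod_triangle|].
    pose proof (inv_pow_sum (rho e) A B ltac:(lra)). lra.
  - apply ev_and. apply ev_and; auto. apply gauge_small; auto; lra. Qed.

Lemma mod_inv_pow (rho : rnet) (N : nat) : is_gauge rho -> moderate rho (fun e => RtoC (/ rho e ^ N)).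
Proof. intros Hg. exists N. apply ev_true. intros e He. pose proof (gauge_pos rho Hg e He).
  rewrite Cmod_R, Rabs_pos_eq. lra. apply Rlt_le, Rinv_0_lt_compat, pow_lt; lra. Qed.

Lemma series_facts (a : nat -> net) (e t s : R) : Rbar_lt (Finite t) (rad a e) -> 1 <= s < t ->
  ex_series (fun n => Cmod (a n e) * s ^ n) /\ ex_series (fun n => Cmod (Dco a n e) * s ^ n).
Proof. intros Hr Hs. unfold rad in Hr.
  pose proof (root_test (fun n => a n e) t s ltac:(lra) Hr) as HT. simpl in HT.
  split.
    apply (ex_series_R_le _ (fun n => INR (S n) * Cmod (a n e) * s ^ n)); auto.
    intros n. rewrite Rabs_pos_eq by (apply Rmult_le_pos; [apply Cmod_ge_0|apply pow_le; lra]).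
    pose proof (Cmod_ge_0 (a n e)). pose proof (pow_le s n ltac:(lra)).
    assert (1 <= INR (S n)) by (rewrite S_INR; pose proof (pos_INR n); lra).
    assert (0 <= Cmod (a n e) * s ^ n) by (apply Rmult_le_pos; auto). nra.
  - apply (ex_series_R_le _ (fun k => INR (S (1 + k)) * Cmod (a (1 + k)%nat e) * s ^ (1 + k))).
    + intros n. unfold Dco. rewrite Cmod_mult, Cmod_R, (Rabs_pos_eq (INR (S n))) by apply pos_INR.
      rewrite Rabs_pos_eq by (apply Rmult_le_pos; [apply Rmult_le_pos; [apply pos_INR|apply Cmod_ge_0]|apply pow_le; lra]).
      simpl (1 + n)%nat. pose proof (Cmod_ge_0 (a (S n) e)). pose proof (pow_le s n ltac:(lra)).
      assert (INR (S n) <= INR (S (S n))) by (apply le_INR; lia).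
      assert (s ^ n <= s ^ S n) by (simpl; nra).
      apply Rmult_le_compat; try (apply Rmult_le_pos; auto; apply pos_INR); auto.
      apply Rmult_le_compat_r; auto.
    + apply (ex_series_incr_n (fun n => INR (S n) * Cmod (a n e) * s ^ n) 1). auto.
Qed.

Definition Hyp (rho : rnet) (F : net -> net) (c : net) (a : nat -> net) (M : rnet) (P : nat) : Prop :=
  is_gauge rho /\ moderate rho c /\ weakly_moderate rho a /\
  (forall z, moderate rho z -> in_conv_set rho a c z) /\
  (forall z, moderate rho z -> conv_reps rho a c z (F z)) /\
  (forall z, moderate rho z -> abs_lt rho (F z) M) /\
  eventually0 (fun e => Rabs (M e) <= / rho e ^ P).

Lemma rad_big rho F c a M P : Hyp rho F c a M P -> forall N,
  eventually0 (fun e => Rbar_lt (Finite (/ rho e ^ N)) (rad a e)).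
Proof. intros (Hg & Hc & Ha & Hconv & _) N.
  set (z := fun e => Cplus (c e) (RtoC (/ rho e ^ N))).
  assert (Hz : moderate rho z) by (apply mod_plus; auto; apply mod_inv_pow; auto).
  destruct (Hconv z Hz) as [_ [[m Hm] _]].
  revert Hm. apply ev_mono. intros e He H. pose proof (gauge_pos rho Hg e He).
  eapply Rbar_lt_le_trans'; [|exact H].
  unfold z. replace (Cminus (Cplus (c e) (RtoC (/ rho e ^ N))) (c e)) with (RtoC (/ rho e ^ N)) by ring.
  rewrite Cmod_R, Rabs_pos_eq. pose proof (pow_lt (rho e) m ltac:(lra)). lra.
  apply Rlt_le, Rinv_0_lt_compat, pow_lt; lra. Qed.

Lemma close_terms (A A' : nat -> C) (x : C) (r : R) (N r0 : nat) : 0 < r <= 1/2 -> Cmod x <= / r ^ N ->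
  (forall n, Cmod (Cminus (A' n) (A n)) <= r ^ (n * (N + 1) + r0)) ->
  forall n, Cmod (Cmult (Cminus (A' n) (A n)) (Cpow x n)) <= r ^ r0 * (1/2) ^ n.
Proof. intros Hr Hx H n. rewrite Cmod_mult, Cmod_pow.
  eapply Rle_trans. apply Rmult_le_compat; [apply Cmod_ge_0| apply pow_le, Cmod_ge_0| apply H| apply pow_incr; split; [apply Cmod_ge_0|exact Hx]].
  rewrite pow_inv_cancel by lra. apply Rmult_le_compat_l. apply pow_le; lra.
  apply pow_incr. simpl; lra. Qed.

Lemma close_terms_D (A A' : nat -> C) (x : C) (r : R) (N r0 : nat) : 0 < r <= 1/2 -> Cmod x <= / r ^ N ->
  (forall n, Cmod (Cminus (A' n) (A n)) <= r ^ (n * (N + 2) + r0)) ->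
  forall n, Cmod (Cmult (Cmult (RtoC (INR (S n))) (Cminus (A' (S n)) (A (S n)))) (Cpow x n)) <= r ^ r0 * (1/2) ^ n.
Proof. intros Hr Hx H n. rewrite !Cmod_mult, Cmod_pow, Cmod_R, Rabs_pos_eq by apply pos_INR.
  assert (H1 : Cmod (Cminus (A' (S n)) (A (S n))) <= r ^ (n * (N + 2) + r0)).
  { eapply Rle_trans; [apply H|]. apply pow_mono_dec; [lra|]. nia. }
  assert (H2 : Cmod (Cminus (A' (S n)) (A (S n))) * Cmod x ^ n <= r ^ r0 * (r ^ 2) ^ n).
  { rewrite <- (pow_inv_cancel r n N 2 r0) by lra. apply Rmult_le_compat; auto. apply Cmod_ge_0. apply pow_le, Cmod_ge_0.
    apply pow_incr; split; [apply Cmod_ge_0|exact Hx]. }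
  pose proof (INR_S_le n).
  assert ((r^2)^n <= (1/4)^n) by (apply pow_incr; split; [apply pow_le; lra| simpl; nra]).
  assert (Heq : 2 ^ n * (1/4) ^ n = (1/2) ^ n) by (rewrite <- Rpow_mult_distr; f_equal; field).
  pose proof (pow_le r r0 ltac:(lra)). pose proof (pos_INR (S n)).
  assert (0 <= Cmod (Cminus (A' (S n)) (A (S n))) * Cmod x ^ n) by (apply Rmult_le_pos; [apply Cmod_ge_0|apply pow_le, Cmod_ge_0]).
  pose proof (pow_le (r^2) n ltac:(apply pow_le; lra)).
  rewrite Rmult_assoc.
  apply Rle_trans with (INR (S n) * (r ^ r0 * (r ^ 2) ^ n)). apply Rmult_le_compat_l; auto.
  apply Rle_trans with (2 ^ n * (r ^ r0 * (1/4) ^ n)).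
  apply Rmult_le_compat; auto. apply Rmult_le_pos; auto. apply Rmult_le_compat_l; auto.
  replace (2 ^ n * (r ^ r0 * (1/4)^n)) with (r^r0 * (2^n * (1/4)^n)) by ring. rewrite Heq. lra. Qed.

Lemma mod_bounded (rho : rnet) (w : net) (N : nat) : (forall e, 0 < e <= 1 -> Cmod (w e) <= / rho e ^ N) -> moderate rho w.
Proof. intros H. exists N. apply ev_true. auto. Qed.

Lemma inv_pow_plus (r : R) (K : nat) (y : R) : 0 < r <= 1/2 -> y <= 7 -> / r ^ K + y <= / r ^ (K + 3).
Proof. intros Hr Hy. replace (K + 3)%nat with (S (S (S K))) by lia.
  pose proof (inv_pow_double r K Hr). pose proof (inv_pow_double r (S K) Hr).
  pose proof (inv_pow_double r (S (S K)) Hr). pose proof (inv_pow_ge1 r K ltac:(lra)). lra. Qed.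

Lemma exC_pow_series (A : nat -> C) (x : C) (s : R) : Cmod x <= s ->
  ex_series (fun n => Cmod (A n) * s ^ n) -> exC (fun n => Cmult (A n) (Cpow x n)).
Proof. intros Hx H.
  apply (exC_bound _ (fun n => Cmod (A n) * s ^ n)); auto. intros n. rewrite Cmod_mult, Cmod_pow.
  apply Rmult_le_compat_l. apply Cmod_ge_0. apply pow_incr; split; auto; apply Cmod_ge_0. Qed.

Lemma D_mod rho F c a M P : Hyp rho F c a M P -> forall N (w : net), (forall e, 0 < e <= 1 -> Cmod (w e) <= / rho e ^ N) ->
  exists p, eventually0 (fun e => Cmod (Dfn a e (w e)) <= / rho e ^ p).
Proof.
  intros HH N w Hw. pose proof HH as (Hg & Hc & Ha & Hconv & Hreps & _).
  set (z := fun e => Cplus (c e) (w e)).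
  assert (Hz : moderate rho z) by (apply mod_plus; auto; eapply mod_bounded; eauto).
  destruct (Hreps z Hz) as (z' & c' & a' & Hz' & Hc' & Ha' & _ & _ & _ & Hd).
  set (zh := fun e => Cplus (c' e) (w e)).
  assert (Hzh : gequiv rho zh z).
  { unfold gequiv. replace (fun e => Cminus (zh e) (z e)) with (fun e => Cminus (c' e) (c e)); auto.
    extensionality e. unfold zh, z. ring. }
  destruct (Hd zh Hzh) as [p0 Hp0].
  exists (p0 + 3)%nat.
  pose proof (ev_and _ _ Hp0 (ev_and _ _ (Ha' (N + 2)%nat 0%nat) (ev_and _ _ (rad_big _ _ _ _ _ _ HH (S N)) (gauge_small rho (1/2) Hg ltac:(lra))))) as Hev.
  revert Hev. apply ev_mono. intros e He [HV [Hcl [Hrad [Hr1 Hr2]]]].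
  set (r := rho e) in *.
  assert (Hr : 0 < r <= 1/2) by lra.
  set (s := / r ^ N).
  assert (Hs1 : 1 <= s) by (apply inv_pow_ge1; lra).
  assert (Hst : s < / r ^ S N) by (pose proof (inv_pow_double r N Hr); unfold s in *; lra).
  destruct (series_facts a e (/ r ^ S N) s Hrad ltac:(lra)) as [_ HD].
  assert (HexD : exC (fun n => Cmult (Dco a n e) (Cpow (w e) n))) by (apply (exC_pow_series _ _ s); auto).
  set (diff := fun n => Cmult (Cmult (RtoC (INR (S n))) (Cminus (a' (S n) e) (a (S n) e))) (Cpow (w e) n)).
  assert (Hdiff : forall n, Cmod (diff n) <= r ^ 0 * (1/2) ^ n).
  { intros n. apply (close_terms_D (fun n => a n e) (fun n => a' n e) (w e) r N 0); auto.
    }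
  assert (HexDiff : exC diff) by (apply (exC_geom _ (r ^ 0)); auto).
  assert (HVe : Cseries (fun n => Cmult (RtoC (INR (S n))) (Cmult (a' (S n) e) (Defs.Cpow (Cminus (zh e) (c' e)) n)))
              = Cplus (Dfn a e (w e)) (Cseries diff)).
  { unfold Dfn. rewrite <- Cseries_plus by auto. apply Cseries_ext; intros n.
    replace (Cminus (zh e) (c' e)) with (w e) by (unfold zh; ring).
    unfold diff, Dco. change (Defs.Cpow (w e) n) with (Cpow (w e) n). ring. }
  rewrite HVe in HV.
  pose proof (Cseries_geom_bound diff (r ^ 0) Hdiff). simpl pow in H.
  assert (Cmod (Dfn a e (w e)) <= Cmod (Cplus (Dfn a e (w e)) (Cseries diff)) + Cmod (Cseries diff)).
  { replace (Dfn a e (w e)) with (Cplus (Cplus (Dfn a e (w e)) (Cseries diff)) (Copp (Cseries diff))) at 1 by ring.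
    eapply Rle_trans; [apply Cmod_triangle|]. rewrite Cmod_opp. lra. }
  pose proof (inv_pow_plus r p0 4 Hr ltac:(lra)). lra.
Qed.

Lemma Dco_bound rho F c a M P : Hyp rho F c a M P -> forall N, exists p,
  eventually0 (fun e => forall n, Cmod (Dco a n e) * (/ rho e ^ N) ^ n <= / rho e ^ p).
Proof.
  intros HH N. pose proof HH as (Hg & _).
  destruct (unif (fun e x => 0 < e <= 1 -> Cmod x <= / rho e ^ N)
                 (fun e x p => 0 < rho e <= 1 -> Cmod (Dfn a e x) <= / rho e ^ p)) as [p Hp].
  - intros e He. pose proof (gauge_pos rho Hg e He). rewrite Cmod_0.
    apply Rlt_le, Rinv_0_lt_compat, pow_lt; lra.
  - intros e x p q Hpq H Hr. eapply Rle_trans; [apply H; auto|]. apply inv_pow_mono; auto.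
  - intros w Hw. destruct (D_mod rho F c a M P HH N w Hw) as [p Hp]. exists p.
    revert Hp; apply ev_mono. auto.
  - exists p. pose proof (ev_and _ _ Hp (ev_and _ _ (rad_big _ _ _ _ _ _ HH (S N)) (gauge_small rho (1/2) Hg ltac:(lra)))) as Hev.
    revert Hev. apply ev_mono. intros e He [HB [Hrad [Hr1 Hr2]]] n.
    set (r := rho e) in *. assert (Hr : 0 < r <= 1/2) by lra.
    assert (Hs1 : 1 <= / r ^ N) by (apply inv_pow_ge1; lra).
    assert (Hst : / r ^ N < / r ^ S N) by (pose proof (inv_pow_double r N Hr); lra).
    destruct (series_facts a e (/ r ^ S N) (/ r ^ N) Hrad ltac:(lra)) as [_ HD].
    apply (cauchy_est (fun n => Dco a n e) (/ r ^ N) (/ r ^ p)); auto; try lra.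
    intros x Hx. apply HB; auto; lra.
Qed.

Lemma lip_series (A : nat -> C) (x y : C) (s B : R) : 0 <= s -> Cmod x <= s -> Cmod y <= s ->
  (forall n, Cmod (Cmult (RtoC (INR (S n))) (A (S n))) * s ^ n <= B * (1/2) ^ n) ->
  exC (fun n => Cmult (A n) (Cpow x n)) -> exC (fun n => Cmult (A n) (Cpow y n)) ->
  Cmod (Cminus (Cseries (fun n => Cmult (A n) (Cpow x n))) (Cseries (fun n => Cmult (A n) (Cpow y n))))
   <= 4 * (B * Cmod (Cminus x y)).
Proof. intros Hs Hx Hy HB Ex Ey. rewrite <- Cseries_minus by auto.
  rewrite Cseries_shift by (apply exC_minus; auto). simpl Cpow.
  replace (Cminus (Cmult (A 0%nat) 1) (Cmult (A 0%nat) 1)) with (RtoC 0) by ring. rewrite Cplus_0_l.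
  apply Cseries_geom_bound. intros n.
  replace (Cminus (Cmult (A (S n)) (Cmult x (Cpow x n))) (Cmult (A (S n)) (Cmult y (Cpow y n))))
    with (Cmult (A (S n)) (Cminus (Cpow x (S n)) (Cpow y (S n)))) by (simpl; ring).
  rewrite Cmod_mult. pose proof (Cpow_diff x y s n Hx Hy).
  specialize (HB n). rewrite Cmod_mult, Cmod_R, Rabs_pos_eq in HB by apply pos_INR.
  pose proof (Cmod_ge_0 (A (S n))). pose proof (Cmod_ge_0 (Cminus x y)).
  apply Rle_trans with (Cmod (A (S n)) * (INR (S n) * s ^ n * Cmod (Cminus x y))).
  apply Rmult_le_compat_l; auto.
  replace (Cmod (A (S n)) * (INR (S n) * s ^ n * Cmod (Cminus x y))) with ((INR (S n) * Cmod (A (S n)) * s ^ n) * Cmod (Cminus x y)) by ring.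
  replace (B * Cmod (Cminus x y) * (1/2)^n) with ((B * (1/2)^n) * Cmod (Cminus x y)) by ring.
  apply Rmult_le_compat_r; auto.
Qed.

Lemma Cmod_tri_sub (x y : C) : Cmod x <= Cmod y + Cmod (Cminus x y).
Proof. replace x with (Cplus y (Cminus x y)) at 1 by ring. apply Cmod_triangle. Qed.

Lemma Cmod_sym_sub (x y : C) : Cmod (Cminus x y) = Cmod (Cminus y x).
Proof. replace (Cminus x y) with (Copp (Cminus y x)) by ring. apply Cmod_opp. Qed.

Lemma g_bound_pt rho F c a M P : Hyp rho F c a M P -> forall N (w : net),
  (forall e, 0 < e <= 1 -> Cmod (w e) <= / rho e ^ N) ->
  eventually0 (fun e => Cmod (gfn a e (w e)) <= / rho e ^ S P).
Proof.
  intros HH N w Hw. pose proof HH as (Hg & Hc & Ha & Hconv & Hreps & Hbd & HM).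
  set (z := fun e => Cplus (c e) (w e)).
  assert (Hz : moderate rho z) by (apply mod_plus; auto; eapply mod_bounded; eauto).
  destruct (Hreps z Hz) as (z' & c' & a' & Hz' & Hc' & Ha' & _ & _ & Hv & _).
  destruct (Hbd z Hz) as [m Hm].
  destruct (Dco_bound _ _ _ _ _ _ HH (N + 2)) as [p Hp].
  pose proof (ev_and _ _ Hm (ev_and _ _ HM (ev_and _ _ Hp (ev_and _ _ (Hz' (p + 3)%nat)
     (ev_and _ _ (Hc' (p + 3)%nat) (ev_and _ _ (Hv 1%nat) (ev_and _ _ (Ha' (N + 1 + 1)%nat 1%nat)
     (ev_and _ _ (rad_big _ _ _ _ _ _ HH (N + 2)%nat) (gauge_small rho (1/16) Hg ltac:(lra)))))))))) as Hev.
  revert Hev. apply ev_mono.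
  intros e He [Hm' [HM' [Hp' [Hz'' [Hc'' [Hv' [Ha'' [Hrad [Hr1 Hr2]]]]]]]]].
  set (r := rho e) in *. assert (Hr : 0 < r <= 1/2) by lra.
  set (u := Cminus (z' e) (c' e)).
  assert (Hdel : Cmod (Cminus u (w e)) <= 2 * r ^ (p + 3)).
  { replace (Cminus u (w e)) with (Cminus (Cminus (z' e) (z e)) (Cminus (c' e) (c e))) by (unfold u, z; ring).
    unfold Cminus at 1. eapply Rle_trans; [apply Cmod_triangle|]. rewrite Cmod_opp. lra. }
  assert (Hrp : r ^ (p + 3) <= 1/8).
  { rewrite pow_add. pose proof (pow_le1 r p ltac:(lra)). pose proof (pow_lt r p ltac:(lra)).
    assert (r^3 <= 1/8) by (simpl; nra). pose proof (pow_lt r 3 ltac:(lra)). nra. }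
  assert (Hwe : Cmod (w e) <= / r ^ N) by auto.
  assert (HN1 : / r ^ N + 1 <= / r ^ (N + 1)).
  { replace (N + 1)%nat with (S N) by lia. pose proof (inv_pow_double r N Hr). pose proof (inv_pow_ge1 r N ltac:(lra)). lra. }
  assert (Hu : Cmod u <= / r ^ (N + 1)).
  { pose proof (Cmod_tri_sub u (w e)). lra. }
  set (s := / r ^ (N + 1)).
  assert (Hs1 : 1 <= s) by (apply inv_pow_ge1; lra).
  assert (Hus : Cmod u <= s) by (unfold s; lra).
  assert (Hws : Cmod (w e) <= s) by (unfold s; lra).
  assert (Hst : s < / r ^ (N + 2)).
  { unfold s. replace (N + 2)%nat with (S (N + 1)) by lia. pose proof (inv_pow_double r (N + 1) Hr). pose proof (inv_pow_ge1 r (N+1) ltac:(lra)). lra. }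
  destruct (series_facts a e _ s Hrad ltac:(lra)) as [HA _].
  assert (Exw : exC (fun n => Cmult (a n e) (Cpow (w e) n))) by (apply (exC_pow_series _ _ s); auto; unfold s; lra).
  assert (Exu : exC (fun n => Cmult (a n e) (Cpow u n))) by (apply (exC_pow_series _ _ s); auto).
  set (diff := fun n => Cmult (Cminus (a' n e) (a n e)) (Cpow u n)).
  assert (Hdiff : forall n, Cmod (diff n) <= r ^ 1 * (1/2) ^ n).
  { intros n. apply (close_terms (fun n => a n e) (fun n => a' n e) u r (N + 1) 1); auto. }
  assert (Exd : exC diff) by (apply (exC_geom _ (r ^ 1)); auto).
  assert (HCs : Cseries (fun n => Cmult (a' n e) (Defs.Cpow u n)) = Cplus (gfn a e u) (Cseries diff)).
  { unfold gfn. rewrite <- Cseries_plus by auto. apply Cseries_ext; intros n. unfold diff.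
    change (Defs.Cpow u n) with (Cpow u n). ring. }
  pose proof (Cseries_geom_bound diff (r ^ 1) Hdiff) as Hd4.
  assert (HL : Cmod (Cminus (gfn a e (w e)) (gfn a e u)) <= 4 * (/ r ^ p * Cmod (Cminus (w e) u))).
  { apply (lip_series (fun n => a n e) (w e) u s (/ r ^ p)); [lra|exact Hws|exact Hus| |exact Exw|exact Exu].
    intros n. specialize (Hp' n). unfold Dco in Hp'.
    assert (Es : s ^ n = (/ r ^ (N + 2)) ^ n * r ^ n).
    { unfold s. rewrite <- Rpow_mult_distr. f_equal. replace (N + 2)%nat with (S (N + 1)) by lia. simpl. field. split; [apply pow_nonzero; lra|lra]. }
    rewrite Es. pose proof (Cmod_ge_0 (Cmult (RtoC (INR (S n))) (a (S n) e))).
    pose proof (pow_le (/ r ^ (N + 2)) n ltac:(apply Rlt_le, Rinv_0_lt_compat, pow_lt; lra)).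
    assert (r ^ n <= (1/2) ^ n) by (apply pow_incr; lra).
    pose proof (pow_le r n ltac:(lra)).
    rewrite <- Rmult_assoc. apply Rmult_le_compat; auto. apply Rmult_le_pos; auto. }
  rewrite Cmod_sym_sub in Hdel.
  assert (Hlip : Cmod (Cminus (gfn a e (w e)) (gfn a e u)) <= 1).
  { eapply Rle_trans; [exact HL|]. rewrite pow_add in Hdel.
    assert (/ r ^ p * (2 * (r ^ p * r ^ 3)) = 2 * r ^ 3) by (field; apply pow_nonzero; lra).
    assert (r ^ 3 <= 1/8) by (simpl; nra).
    pose proof (Cmod_ge_0 (Cminus (w e) u)).
    assert (/ r ^ p * Cmod (Cminus (w e) u) <= / r ^ p * (2 * (r ^ p * r ^ 3))).
    { apply Rmult_le_compat_l; auto. apply Rlt_le, Rinv_0_lt_compat, pow_lt; lra. }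
    lra. }
  assert (HFz : Cmod (F z e) <= / r ^ P).
  { pose proof (pow_lt r m ltac:(lra)). pose proof (Rle_abs (M e)). lra. }
  assert (Hgw1 : Cmod (gfn a e (w e)) <= Cmod (gfn a e u) + 1) by (pose proof (Cmod_tri_sub (gfn a e (w e)) (gfn a e u)); lra).
  assert (Hgu : Cmod (gfn a e u) <= Cmod (Cseries (fun n => Cmult (a' n e) (Defs.Cpow u n))) + 4 * r ^ 1).
  { rewrite HCs. pose proof (Cmod_tri_sub (gfn a e u) (Cplus (gfn a e u) (Cseries diff))).
    replace (Cminus (gfn a e u) (Cplus (gfn a e u) (Cseries diff))) with (Copp (Cseries diff)) in H by ring.
    rewrite Cmod_opp in H. lra. }
  assert (HCs' : Cmod (Cseries (fun n => Cmult (a' n e) (Defs.Cpow u n))) <= Cmod (F z e) + r ^ 1).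
  { pose proof (Cmod_tri_sub (Cseries (fun n => Cmult (a' n e) (Defs.Cpow u n))) (F z e)).
    rewrite Cmod_sym_sub in H. unfold u in *. lra. }
  rewrite !pow_1 in *. rewrite inv_pow_S by lra.
  pose proof (inv_pow_ge1 r P ltac:(lra)).
  assert (16 <= / r). { replace 16 with (/ (1/16)) by field. apply Rinv_le_contravar; lra. }
  nra.
Qed.

Lemma a_bound rho F c a M P : Hyp rho F c a M P -> forall N,
  eventually0 (fun e => forall n, Cmod (a n e) * (/ rho e ^ N) ^ n <= / rho e ^ S P).
Proof.
  intros HH N. pose proof HH as (Hg & _).
  destruct (unif (fun e x => 0 < e <= 1 -> Cmod x <= / rho e ^ N)
                 (fun e x p => Cmod (gfn a e x) <= / rho e ^ S P)) as [p Hp].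
  - intros e He. pose proof (gauge_pos rho Hg e He). rewrite Cmod_0.
    apply Rlt_le, Rinv_0_lt_compat, pow_lt; lra.
  - intros e x p q _ H. exact H.
  - intros w Hw. exists O. apply (g_bound_pt rho F c a M P HH N w Hw).
  - pose proof (ev_and _ _ Hp (ev_and _ _ (rad_big _ _ _ _ _ _ HH (S N)) (gauge_small rho (1/2) Hg ltac:(lra)))) as Hev.
    revert Hev. apply ev_mono. intros e He [HB [Hrad [Hr1 Hr2]]] n.
    set (r := rho e) in *. assert (Hr : 0 < r <= 1/2) by lra.
    assert (Hs1 : 1 <= / r ^ N) by (apply inv_pow_ge1; lra).
    assert (Hst : / r ^ N < / r ^ S N) by (pose proof (inv_pow_double r N Hr); lra).
    destruct (series_facts a e (/ r ^ S N) (/ r ^ N) Hrad ltac:(lra)) as [HA _].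
    apply (cauchy_est (fun n => a n e) (/ r ^ N) (/ r ^ S P)); auto; try lra.
    intros x Hx. apply HB; auto; lra.
Qed.

Lemma inv_pow_split (r : R) (N d k : nat) : 0 < r -> (/ r ^ N) ^ k = (/ r ^ (N + d)) ^ k * (r ^ d) ^ k.
Proof. intros Hr. rewrite <- Rpow_mult_distr. f_equal. rewrite pow_add. field.
  split; apply pow_nonzero; lra. Qed.

Theorem main_thm (rho : R -> R) (F : net -> net) :
  is_gauge rho ->
  gen_entire rho F ->
  (exists M : rnet, rmoderate rho M /\ rlt rho (fun _ => 0) M /\
     forall z, moderate rho z -> abs_lt rho (F z) M) ->
  exists c : net, moderate rho c /\ forall z, moderate rho z -> gequiv rho (F z) c.
Proof.
  intros Hg Hent HMb. destruct Hent as (c & a & Hc & Ha & Hconv & Hreps).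
  destruct HMb as (M & [P HP] & _ & Hbd).
  assert (HH : Hyp rho F c a M P) by (unfold Hyp; tauto).
  exists (fun e => a 0%nat e). split.
  { destruct Ha as [Q [R0 HQ]]. exists R0. revert HQ. apply ev_mono. intros e He H. apply (H 0%nat). }
  intros z Hz q.
  destruct Hz as [N0 HN0]. pose proof Hc as [Nc HNc].
  destruct (Hreps z (ex_intro _ N0 HN0)) as (z' & c' & a' & Hz' & Hc' & Ha' & _ & _ & Hv & _).
  set (K := S (Nat.max N0 Nc)).
  set (N1 := (K + 3)%nat).
  set (d := (S P + (q + 2))%nat).
  pose proof (ev_and _ _ HN0 (ev_and _ _ HNc (ev_and _ _ (Hz' 0%nat) (ev_and _ _ (Hc' 0%nat)
     (ev_and _ _ (Hv (S q)) (ev_and _ _ (Ha' (N1 + 1)%nat (S q))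
     (ev_and _ _ (a_bound _ _ _ _ _ _ HH (N1 + d)) (ev_and _ _ (rad_big _ _ _ _ _ _ HH (S N1))
     (gauge_small rho (1/16) Hg ltac:(lra)))))))))) as Hev.
  revert Hev. apply ev_mono.
  intros e He [Hz1 [Hc1 [Hz2 [Hc2 [Hv1 [Ha1 [Hab [Hrad [Hr1 Hr2]]]]]]]]].
  set (r := rho e) in *. assert (Hr : 0 < r <= 1/2) by lra.
  simpl pow in Hz2, Hc2.
  set (u := Cminus (z' e) (c' e)).
  assert (Hu : Cmod u <= / r ^ N1).
  { assert (Cmod u <= Cmod (z e) + Cmod (c e) + 2).
    { replace u with (Cplus (Cminus (z e) (c e)) (Cminus (Cminus (z' e) (z e)) (Cminus (c' e) (c e)))) by (unfold u; ring).
      eapply Rle_trans; [apply Cmod_triangle|]. unfold Cminus at 1. eapply Rle_trans. apply Rplus_le_compat; apply Cmod_triangle.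
      unfold Cminus. rewrite !Cmod_opp. fold (Cminus (z' e) (z e)). fold (Cminus (c' e) (c e)). lra. }
    pose proof (inv_pow_sum r N0 Nc Hr). pose proof (inv_pow_plus r K 2 Hr ltac:(lra)). unfold N1. fold K in H0. lra. }
  set (s := / r ^ N1).
  assert (Hs1 : 1 <= s) by (apply inv_pow_ge1; lra).
  assert (Hst : s < / r ^ S N1) by (pose proof (inv_pow_double r N1 Hr); unfold s in *; lra).
  destruct (series_facts a e _ s Hrad ltac:(lra)) as [HA _].
  assert (Exu : exC (fun n => Cmult (a n e) (Cpow u n))) by (apply (exC_pow_series _ _ s); auto).
  set (diff := fun n => Cmult (Cminus (a' n e) (a n e)) (Cpow u n)).
  assert (Hdiff : forall n, Cmod (diff n) <= r ^ S q * (1/2) ^ n).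
  { intros n. apply (close_terms (fun n => a n e) (fun n => a' n e) u r N1 (S q)); auto. }
  assert (Exd : exC diff) by (apply (exC_geom _ (r ^ S q)); auto).
  assert (HCs : Cseries (fun n => Cmult (a' n e) (Defs.Cpow u n)) = Cplus (gfn a e u) (Cseries diff)).
  { unfold gfn. rewrite <- Cseries_plus by auto. apply Cseries_ext; intros n. unfold diff.
    change (Defs.Cpow u n) with (Cpow u n). ring. }
  pose proof (Cseries_geom_bound diff (r ^ S q) Hdiff) as Hd4.
  assert (Hg0 : gfn a e u = Cplus (a 0%nat e) (Cseries (fun n => Cmult (a (S n) e) (Cpow u (S n))))).
  { unfold gfn. rewrite Cseries_shift by auto. simpl Cpow at 1. f_equal. ring. }
  assert (Htail : Cmod (Cseries (fun n => Cmult (a (S n) e) (Cpow u (S n)))) <= 4 * r ^ S q).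
  { apply Cseries_geom_bound. intros n. rewrite Cmod_mult, Cmod_pow.
    specialize (Hab (S n)).
    assert (Cmod u ^ S n <= s ^ S n) by (apply pow_incr; split; [apply Cmod_ge_0|auto]).
    unfold s in H. rewrite (inv_pow_split r N1 d) in H by lra.
    pose proof (Cmod_ge_0 (a (S n) e)).
    assert (Cmod (a (S n) e) * Cmod u ^ S n <= / r ^ S P * (r ^ d) ^ S n).
    { eapply Rle_trans. apply Rmult_le_compat_l; [auto|exact H]. rewrite <- Rmult_assoc.
      apply Rmult_le_compat_r; auto. apply pow_le, pow_le; lra. }
    eapply Rle_trans; [exact H1|].
    change ((r ^ d) ^ S n) with (r ^ d * (r ^ d) ^ n). unfold d at 1. rewrite pow_add.
    assert ((r ^ d) ^ n <= (1/2) ^ n).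
    { apply pow_incr. split. apply pow_le; lra. unfold d. pose proof (pow_le1 r (P + (q+2)) ltac:(lra)).
      replace (S P + (q + 2))%nat with (S (P + (q + 2))) by lia. simpl pow. pose proof (pow_le r (P + (q+2)) ltac:(lra)). nra. }
    assert (/ r ^ S P * (r ^ S P * r ^ (q + 2) * (r ^ d) ^ n) = r ^ (q + 2) * (r ^ d) ^ n) by (field; apply pow_nonzero; lra).
    rewrite H3. assert (r ^ (q + 2) <= r ^ S q) by (apply pow_mono_dec; [lra|lia]).
    apply Rmult_le_compat; auto. apply pow_le; lra. apply pow_le, pow_le; lra. }
  assert (HFa : Cmod (Cminus (F z e) (a 0%nat e)) <=
      Cmod (Cminus (F z e) (Cseries (fun n => Cmult (a' n e) (Defs.Cpow u n)))) + Cmod (Cseries diff)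
      + Cmod (Cseries (fun n => Cmult (a (S n) e) (Cpow u (S n))))).
  { replace (Cminus (F z e) (a 0%nat e)) with
      (Cplus (Cplus (Cminus (F z e) (Cseries (fun n => Cmult (a' n e) (Defs.Cpow u n)))) (Cseries diff))
         (Cseries (fun n => Cmult (a (S n) e) (Cpow u (S n))))).
    - eapply Rle_trans; [apply Cmod_triangle|]. pose proof (Cmod_triangle (Cminus (F z e) (Cseries (fun n => Cmult (a' n e) (Defs.Cpow u n)))) (Cseries diff)). lra.
    - rewrite HCs, Hg0. ring. }
  unfold u in *. cbv beta. change (r ^ S q) with (r * r ^ q) in *.
  assert (16 * r <= 1) by lra. pose proof (pow_le r q ltac:(lra)). nra.
Qed.


Theorem theorem3p4 (rho : R -> R) (F : net -> net) :
  is_gauge rho ->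
  gfun rho F ->
  GHF rho F ->
  gen_entire rho F ->
  (exists M : rnet, rmoderate rho M /\ rlt rho (fun _ => 0) M /\
     forall z, moderate rho z -> abs_lt rho (F z) M) ->
  exists c : net, moderate rho c /\ forall z, moderate rho z -> gequiv rho (F z) c.
Proof.
  intros Hg _ _ Hent HM. apply main_thm; auto.
Qed.
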